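(* Let $G$ be any group and let $\nu(G)$ be the group described in the context. Then: (i) for every $n\geq 0$, $[G,G^\varphi]^{(n)}=[G^{(n)},(G^{(n)})^\varphi]$ (computed inside $\nu(G)$); (ii) for every $n\geq 1$, $\gamma_{n+1}([G,G^\varphi])=[\gamma_{n}(G'),G'^{\varphi}]=[G',\gamma_{n}(G')^{\varphi}]$ (computed inside $\nu(G)$).
   Context: Conventions: ${}^gh=ghg^{-1}$ and $[g,h]=ghg^{-1}h^{-1}$. For a group $G$ let $G^\varphi$ be an isomorphic copy of $G$ via an isomorphism $\varphi:G\to G^\varphi$, $g\mapsto g^\varphi$. The group $\nu(G)$ is the quotient of the free product $G\ast G^\varphi$ by the normal subgroup generated by all words ${}^{g_3}[g_1,g_2^\varphi]\cdot[{}^{g_3}g_1,({}^{g_3}g_2)^\varphi]^{-1}$ and ${}^{g_3^\varphi}[g_1,g_2^\varphi]\cdot[{}^{g_3}g_1,({}^{g_3}g_2)^\varphi]^{-1}$, for all $g_1,g_2,g_3\in G$. For subgroups $A,B\le G$, $[A,B^\varphi]$ denotes the subgroup of $\nu(G)$ generated by all $[a,b^\varphi]$, $a\in A$, $b\in B$. The subgroup $[G,G^\varphi]$ is isomorphic to the non-abelian tensor square $G\otimes G$ of Brown and Loday. $G^{(n)}$ denotes the $n$-th derived subgroup ($G^{(0)}=G$), $\gamma_n$ the $n$-th term of the lower central series ($\gamma_1(H)=H$), and $G'=G^{(1)}$. *)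

(* Defs.v *)
(* Possibly infinite groups; nu(G) built concretely as words in
   the free product G * G^phi modulo the congruence generated by the defining
   relations (a setoid quotient). *)
From Stdlib Require Import List.
Import ListNotations.
Set Implicit Arguments.

Record group := Group {
  gcar :> Type;
  gmul : gcar -> gcar -> gcar;
  ginv : gcar -> gcar;
  gone : gcar;
  gmulA : forall x y z, gmul x (gmul y z) = gmul (gmul x y) z;
  gmul1 : forall x, gmul gone x = x;
  gmulV : forall x, gmul (ginv x) x = gone
}.

(** A "setoid group signature": carrier, equivalence, operations.
    Subgroups are predicates; they are always formed by generation,
    hence closed under the equivalence. *)
Record sgroup := SGroup {
  scar : Type;
  seqv : scar -> scar -> Prop;
  smul : scar -> scar -> scar;
  sinv : scar -> scar;
  sone : scar
}.

Section Generic.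
Variable SG : sgroup.

Inductive gen (X : scar SG -> Prop) : scar SG -> Prop :=
| gen_in x : X x -> gen X x
| gen_one : gen X (sone SG)
| gen_mul x y : gen X x -> gen X y -> gen X (smul SG x y)
| gen_inv x : gen X x -> gen X (sinv SG x)
| gen_eqv x y : seqv SG x y -> gen X x -> gen X y.

Definition scomm (x y : scar SG) : scar SG :=
  smul SG (smul SG (smul SG x y) (sinv SG x)) (sinv SG y).

Definition comm_sub (A B : scar SG -> Prop) : scar SG -> Prop :=
  gen (fun z => exists a b, A a /\ B b /\ z = scomm a b).

Fixpoint derived (H : scar SG -> Prop) (n : nat) : scar SG -> Prop :=
  match n with
  | 0 => H
  | S m => comm_sub (derived H m) (derived H m)
  end.

(** Lower central series: gamma_1(H) = H, gamma_(n+1)(H) = [gamma_n(H), H].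
    (gamma_0 is set to H as well; it is never used.) *)
Fixpoint gamma (H : scar SG -> Prop) (n : nat) : scar SG -> Prop :=
  match n with
  | S (S _ as m) => comm_sub (gamma H m) H
  | _ => H
  end.

Definition setT : scar SG -> Prop := fun _ => True.

Definition sub_eq (A B : scar SG -> Prop) : Prop := forall x, A x <-> B x.

End Generic.

Definition Gs (G : group) : sgroup := @SGroup (gcar G) eq (@gmul G) (@ginv G) (@gone G).

Definition gconj (G : group) (a x : G) : G := @gmul G a (@gmul G x (@ginv G a)).

(** Words of the free product G * G^phi: letters (false,g) = g, (true,g) = g^phi. *)
Section Nu.
Variable G : group.
Definition word := list (bool * gcar G).
Definition winv (w : word) : word := rev (map (fun l => (fst l, @ginv G (snd l))) w).
Definition wconj (a x : word) : word := a ++ x ++ winv a.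
Definition wcomm (x y : word) : word := x ++ y ++ winv x ++ winv y.
Definition iota (g : G) : word := [(false, g)].
Definition phi (g : G) : word := [(true, g)].

Definition rel1 (g1 g2 g3 : G) : word :=
  wconj (iota g3) (wcomm (iota g1) (phi g2))
  ++ winv (wcomm (iota (@gconj G g3 g1)) (phi (@gconj G g3 g2))).
Definition rel2 (g1 g2 g3 : G) : word :=
  wconj (phi g3) (wcomm (iota g1) (phi g2))
  ++ winv (wcomm (iota (@gconj G g3 g1)) (phi (@gconj G g3 g2))).

(** The congruence on words presenting nu(G): free product relations
    (merging letters of the same factor, deleting identities) plus the
    defining relators. *)
Inductive nu_eqv : word -> word -> Prop :=
| nu_refl w : nu_eqv w w
| nu_sym u v : nu_eqv u v -> nu_eqv v u
| nu_trans u v w : nu_eqv u v -> nu_eqv v w -> nu_eqv u w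
| nu_ctx a b u v : nu_eqv u v -> nu_eqv (a ++ u ++ b) (a ++ v ++ b)
| nu_merge (c : bool) (g h : G) : nu_eqv [(c, g); (c, h)] [(c, @gmul G g h)]
| nu_unit (c : bool) : nu_eqv [(c, gone G)] []
| nu_rel1 g1 g2 g3 : nu_eqv (rel1 g1 g2 g3) []
| nu_rel2 g1 g2 g3 : nu_eqv (rel2 g1 g2 g3) [].

Definition Nu : sgroup := @SGroup word nu_eqv (@app _) winv [].

(** [A, B^phi] inside nu(G), for subsets A, B of G. *)
Definition tens (A B : G -> Prop) : word -> Prop :=
  @gen Nu (fun z => exists a b, A a /\ B b /\ z = wcomm (iota a) (phi b)).
End Nu.
Arguments tens G A B : clear implicits.
Arguments derived SG H n : clear implicits.
Arguments gamma SG H n : clear implicits.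
Arguments setT SG _ : clear implicits.
Arguments sub_eq SG A B : clear implicits.

(* Main.v *)
Require Import Defs.
From Stdlib Require Import List Setoid Morphisms.
Import ListNotations.
Set Implicit Arguments.

Section GF.
Variable G : group.
Local Notation "x ** y" := (gmul G x y) (at level 40, left associativity).
Local Notation "x ^-1" := (ginv G x) (at level 2).
Local Notation "1" := (gone G).

Lemma gmulA' (x y z : G) : x ** y ** z = x ** (y ** z).
Proof. now rewrite gmulA. Qed.
Lemma gmulVr (x : G) : x ** x^-1 = 1.
Proof.
  transitivity ((x^-1)^-1 ** x^-1 ** (x ** x^-1)).
  - rewrite gmulV. symmetry. apply gmul1.
  - rewrite gmulA', (gmulA G (x^-1)), gmulV, gmul1. apply gmulV.
Qed.
Lemma gmul1r (x : G) : x ** 1 = x.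
Proof. rewrite <- (gmulV G x), gmulA, gmulVr. apply gmul1. Qed.
Lemma gcancL (x y : G) : x^-1 ** (x ** y) = y.
Proof. rewrite gmulA, gmulV. apply gmul1. Qed.
Lemma gcancR (x y : G) : x ** (x^-1 ** y) = y.
Proof. rewrite gmulA, gmulVr. apply gmul1. Qed.
Lemma ginv_uniq (a b : G) : a ** b = 1 -> a = b^-1.
Proof. intro H. rewrite <- (gmul1r a), <- (gmulVr b), gmulA, H. apply gmul1. Qed.
Lemma ginv_inv (x : G) : (x^-1)^-1 = x.
Proof. symmetry. apply ginv_uniq. apply gmulVr. Qed.
Lemma ginv_mul (x y : G) : (x ** y)^-1 = y^-1 ** x^-1.
Proof. symmetry. apply ginv_uniq. rewrite gmulA', (gmulA G (x^-1)), gmulV, gmul1. apply gmulV. Qed.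
Lemma ginv1 : 1^-1 = 1.
Proof. symmetry. apply ginv_uniq. apply gmul1. Qed.
End GF.

Ltac gsimpl := repeat (rewrite ?ginv_mul, ?ginv_inv, ?ginv1, ?gmulA', ?gmul1, ?gmul1r,
   ?gmulV, ?gmulVr, ?gcancL, ?gcancR).

Section T.
Variable G : group.
Goal forall g a b : G, gconj G g (scomm (Gs G) a b) = scomm (Gs G) (gconj G g a) (gconj G g b).
Proof. intros. unfold gconj, scomm; simpl. gsimpl. reflexivity. Qed.
End T.
Section NuG.
Variable G : group.
Local Notation "x ** y" := (gmul G x y) (at level 40, left associativity).
Local Notation "x ^-1" := (ginv G x) (at level 2).
Local Notation "u =~ v" := (@nu_eqv G u v) (at level 70).
Local Notation W := (word G).
Local Notation i := (iota G).
Local Notation p := (phi G).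

#[global] Instance nu_equiv : Equivalence (@nu_eqv G).
Proof. split; [intro; apply nu_refl | intros ??; apply nu_sym | intros ???; apply nu_trans]. Qed.

Lemma app_l (u v w : W) : u =~ v -> u ++ w =~ v ++ w.
Proof. intro H. exact (nu_ctx [] w H). Qed.
Lemma app_r (u v w : W) : u =~ v -> w ++ u =~ w ++ v.
Proof. intro H. pose proof (nu_ctx w [] H) as H'. now rewrite !app_nil_r in H'. Qed.

#[global] Instance app_proper : Proper (@nu_eqv G ==> @nu_eqv G ==> @nu_eqv G) (@app _).
Proof. intros u u' Hu v v' Hv. transitivity (u' ++ v). now apply app_l. now apply app_r. Qed.

Lemma winv_app (u v : W) : winv (u ++ v) = winv v ++ winv u.
Proof. unfold winv. now rewrite map_app, rev_app_distr. Qed.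
Lemma winv_nil : winv ([] : W) = [].
Proof. reflexivity. Qed.
Lemma winv_winv (u : W) : winv (winv u) = u.
Proof.
  unfold winv. rewrite map_rev, rev_involutive, map_map.
  induction u as [|[c g] u IH]; simpl in *; [reflexivity|]. now rewrite ginv_inv, IH.
Qed.
Lemma winv_i g : winv (i g) = i (g^-1). Proof. reflexivity. Qed.
Lemma winv_p g : winv (p g) = p (g^-1). Proof. reflexivity. Qed.

Lemma merge_i g h : i g ++ i h =~ i (g ** h). Proof. apply nu_merge. Qed.
Lemma merge_p g h : p g ++ p h =~ p (g ** h). Proof. apply nu_merge. Qed.
Lemma merge_i' g h w : i g ++ i h ++ w =~ i (g ** h) ++ w.
Proof. rewrite app_assoc. now rewrite merge_i. Qed.
Lemma merge_p' g h w : p g ++ p h ++ w =~ p (g ** h) ++ w.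
Proof. rewrite app_assoc. now rewrite merge_p. Qed.
Lemma unit_i : i (gone G) =~ []. Proof. apply nu_unit. Qed.
Lemma unit_p : p (gone G) =~ []. Proof. apply nu_unit. Qed.

Lemma linv (u : W) : winv u ++ u =~ [].
Proof.
  induction u as [|[c g] u IH]; [reflexivity|].
  change ((c,g)::u) with ([(c,g)] ++ u).
  rewrite winv_app. change (winv [(c,g)]) with [(c, g^-1)].
  rewrite <- app_assoc, (app_assoc [(c,g^-1)]).
  change ([(c, g^-1)] ++ [(c,g)]) with [(c, g^-1); (c,g)].
  rewrite nu_merge, gmulV, nu_unit. exact IH.
Qed.
Lemma rinv (u : W) : u ++ winv u =~ [].
Proof. pose proof (linv (winv u)) as H. now rewrite winv_winv in H. Qed.

#[global] Instance winv_proper : Proper (@nu_eqv G ==> @nu_eqv G) (@winv G).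
Proof.
  intros u v H.
  transitivity (winv u ++ (v ++ winv v)). { rewrite rinv. now rewrite app_nil_r. }
  rewrite <- H at 1. rewrite app_assoc, linv. reflexivity.
Qed.

Lemma cancL (u w : W) : winv u ++ (u ++ w) =~ w.
Proof. rewrite app_assoc, linv. reflexivity. Qed.
Lemma cancR (u w : W) : u ++ (winv u ++ w) =~ w.
Proof. rewrite app_assoc, rinv. reflexivity. Qed.

Lemma unit_i' w : i (gone G) ++ w =~ w. Proof. rewrite unit_i. reflexivity. Qed.
Lemma unit_p' w : p (gone G) ++ w =~ w. Proof. rewrite unit_p. reflexivity. Qed.
End NuG.
Ltac nstep := first [ progress rewrite ?winv_app, ?winv_winv, ?winv_i, ?winv_p, ?winv_nil, <- ?app_assoc, ?app_nil_r, ?app_nil_l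
 | progress gsimpl
 | rewrite cancL | rewrite cancR | rewrite linv | rewrite rinv
 | rewrite merge_i' | rewrite merge_p' | rewrite merge_i | rewrite merge_p
 | rewrite unit_i' | rewrite unit_p' | rewrite unit_i | rewrite unit_p ].
Ltac nsimpl := unfold wcomm, wconj in *; repeat nstep.


Section NuT.
Variable G : group.
Local Notation "x ** y" := (gmul G x y) (at level 40, left associativity).
Local Notation "x ^-1" := (ginv G x) (at level 2).
Local Notation "u =~ v" := (@nu_eqv G u v) (at level 70).
Local Notation W := (word G).
Local Notation i := (iota G).
Local Notation p := (phi G).


Lemma CI1 (x y z : W) : wcomm (x ++ y) z =~ wconj x (wcomm y z) ++ wcomm x z.
Proof. nsimpl. reflexivity. Qed.
Lemma CI2 (x y z : W) : wcomm x (y ++ z) =~ wcomm x y ++ wconj y (wcomm x z).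
Proof. nsimpl. reflexivity. Qed.
Lemma CI3 (x z : W) : wcomm (winv x) z =~ wconj (winv x) (winv (wcomm x z)).
Proof. nsimpl. reflexivity. Qed.
Lemma CI4 (x y : W) : wcomm x (winv y) =~ wconj (winv y) (winv (wcomm x y)).
Proof. nsimpl. reflexivity. Qed.
Lemma CI5 (z : W) : wcomm [] z =~ [].
Proof. nsimpl. reflexivity. Qed.
Lemma CI6 (z : W) : wcomm z [] =~ [].
Proof. nsimpl. reflexivity. Qed.
Lemma wconj_app (w x y : W) : wconj w (x ++ y) =~ wconj w x ++ wconj w y.
Proof. nsimpl. reflexivity. Qed.
Lemma wconj_nil (w : W) : wconj w [] =~ [].
Proof. nsimpl. reflexivity. Qed.
Lemma wconj_winv (w x : W) : wconj w (winv x) = winv (wconj w x).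
Proof. unfold wconj. now rewrite !winv_app, winv_winv, app_assoc. Qed.
Lemma wconj_comm (w x y : W) : wconj w (wcomm x y) =~ wcomm (wconj w x) (wconj w y).
Proof. nsimpl. reflexivity. Qed.
Lemma wconj_cons l (w x : W) : wconj (l :: w) x = wconj [l] (wconj w x).
Proof. unfold wconj. change (l :: w) with ([l] ++ w). rewrite !winv_app, <- !app_assoc. reflexivity. Qed.
End NuT.
Section K.
Variable G : group.
Local Notation "x ** y" := (gmul G x y) (at level 40, left associativity).
Local Notation "x ^-1" := (ginv G x) (at level 2).
Local Notation "u =~ v" := (@nu_eqv G u v) (at level 70).
Local Notation W := (word G).
Local Notation i := (iota G).
Local Notation p := (phi G).
Local Notation cj := (gconj G).

#[global] Instance wconj_proper (w : W) : Proper (@nu_eqv G ==> @nu_eqv G) (wconj w).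
Proof. intros x y H. unfold wconj. now rewrite H. Qed.
#[global] Instance wcomm_proper : Proper (@nu_eqv G ==> @nu_eqv G ==> @nu_eqv G) (@wcomm G).
Proof. intros x x' H y y' H'. unfold wcomm. now rewrite H, H'. Qed.

Lemma from_rel (X Y : W) : X ++ winv Y =~ [] -> X =~ Y.
Proof.
  intro H. transitivity (X ++ winv Y ++ Y). { rewrite linv, app_nil_r. reflexivity. }
  rewrite app_assoc, H. reflexivity.
Qed.

Lemma rel1' g a b : wconj (i g) (wcomm (i a) (p b)) =~ wcomm (i (cj g a)) (p (cj g b)).
Proof. apply from_rel. exact (nu_rel1 G a b g). Qed.
Lemma rel2' g a b : wconj (p g) (wcomm (i a) (p b)) =~ wcomm (i (cj g a)) (p (cj g b)).
Proof. apply from_rel. exact (nu_rel2 G a b g). Qed.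

Definition pi (w : W) : G := fold_right (fun l acc => gmul G (snd l) acc) (gone G) w.
Lemma pi_app u v : pi (u ++ v) = pi u ** pi v.
Proof. induction u as [|l u IH]; simpl. now rewrite gmul1. now rewrite IH, gmulA. Qed.
Lemma pi_winv u : pi (winv u) = (pi u)^-1.
Proof.
  induction u as [|[c g] u IH]. simpl. now rewrite ginv1.
  change ((c,g)::u) with ([(c,g)] ++ u). rewrite winv_app, pi_app, IH, pi_app.
  simpl. now gsimpl.
Qed.
Lemma pi_i g : pi (i g) = g. Proof. simpl. apply gmul1r. Qed.
Lemma pi_p g : pi (p g) = g. Proof. simpl. apply gmul1r. Qed.

Lemma conj_gen w a b :
  wconj w (wcomm (i a) (p b)) =~ wcomm (i (cj (pi w) a)) (p (cj (pi w) b)).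
Proof.
  induction w as [|[c g] w IH].
  - simpl pi. unfold gconj. rewrite !gmul1, ginv1, !gmul1r. unfold wconj. simpl app.
    rewrite ?winv_nil, ?app_nil_r. reflexivity.
  - rewrite wconj_cons, IH.
    assert (E : forall x, cj (pi ((c,g)::w)) x = cj g (cj (pi w) x)).
    { intro x. simpl. unfold gconj. now gsimpl. }
    rewrite !E. destruct c.
    + change [(true,g)] with (p g). apply rel2'.
    + change [(false,g)] with (i g). apply rel1'.
Qed.

Lemma conj_gen' w g a b : pi w = g ->
  wconj w (wcomm (i a) (p b)) =~ wcomm (i (cj g a)) (p (cj g b)).
Proof. intros <-. apply conj_gen. Qed.

Lemma cj1 x : cj (gone G) x = x. Proof. unfold gconj. now gsimpl. Qed.

Lemma abs_lemma (u v y : W) :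
  wcomm v y =~ wcomm u y ->
  wconj (u ++ winv v) (wcomm u y) =~ wcomm u y ->
  wconj (u ++ winv v) y =~ y.
Proof.
  intros H1 H2.
  rewrite <- H1 in H2 at 1.
  unfold wconj, wcomm in H2. revert H2. nsimpl. intro H2.
  apply (app_r (winv y ++ winv u)) in H2. revert H2. nsimpl. intro H3.
  apply (app_l u) in H3. revert H3. nsimpl. intro H3.
  apply winv_proper in H3. revert H3. nsimpl. intro H4.
  unfold wconj. nsimpl.
  rewrite (app_assoc y v), (app_assoc (winv v) (y ++ v)), H4. nsimpl. reflexivity.
Qed.

End K.
Section K2.
Variable G : group.
Local Notation "x ** y" := (gmul G x y) (at level 40, left associativity).
Local Notation "x ^-1" := (ginv G x) (at level 2).
Local Notation "u =~ v" := (@nu_eqv G u v) (at level 70).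
Local Notation W := (word G).
Local Notation i := (iota G).
Local Notation p := (phi G).
Local Notation cj := (gconj G).
Local Notation gc := (scomm (Gs G)).

Lemma comm_conj_eq (t s s' : W) : wconj s t =~ wconj s' t -> wcomm t s =~ wcomm t s'.
Proof.
  intro H. transitivity (t ++ winv (wconj s t)).
  - unfold wconj, wcomm. rewrite !winv_app, winv_winv, <- !app_assoc. reflexivity.
  - rewrite H. unfold wconj, wcomm. rewrite !winv_app, winv_winv, <- !app_assoc. reflexivity.
Qed.

Lemma comm_absorb (y x z : W) : wconj x z =~ z -> wcomm (y ++ x) z =~ wcomm y z.
Proof.
  intro H. transitivity (y ++ wconj x z ++ winv y ++ winv z).
  - unfold wconj, wcomm. rewrite !winv_app, <- !app_assoc. reflexivity.
  - rewrite H. reflexivity.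
Qed.

Lemma pi_wcomm_ip c d : pi (wcomm (i c) (p d)) = gc c d.
Proof. unfold wcomm. rewrite !pi_app, !pi_winv, pi_i, pi_p. simpl. now gsimpl. Qed.

Theorem Kid a b c d :
  wcomm (wcomm (i a) (p b)) (wcomm (i c) (p d)) =~ wcomm (i (gc a b)) (p (gc c d)).
Proof.
  set (k := gc c d).
  rewrite (comm_conj_eq _ _ (p k)).
  2:{ rewrite (@conj_gen' G _ k) by apply pi_wcomm_ip.
      rewrite (@conj_gen' G _ k) by apply pi_p. reflexivity. }
  set (u := i (cj b a)). set (v := wconj (p b) (i a)).
  assert (E1 : wcomm (i a) (p b) =~ i (gc a b) ++ (u ++ winv v)).
  { subst u v. unfold gconj. simpl scomm. nsimpl. reflexivity. }
  rewrite E1, comm_absorb. reflexivity.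
  apply abs_lemma.
  - transitivity (wconj (p b) (wcomm (i a) (p (cj (b^-1) k)))).
    + subst v. unfold gconj. nsimpl. reflexivity.
    + rewrite (@conj_gen' G _ b) by apply pi_p. subst u.
      replace (cj b (cj b^-1 k)) with k. reflexivity.
      unfold gconj. now gsimpl.
  - subst u. rewrite (@conj_gen' G _ (gone G)).
    + rewrite !cj1. reflexivity.
    + subst v. unfold wconj. rewrite !pi_app, !pi_winv, !pi_app, !pi_winv, !pi_i, !pi_p.
      unfold gconj. now gsimpl.
Qed.
End K2.
Lemma gen_mono (SG : sgroup) (S S' : scar SG -> Prop) :
  (forall x, S x -> S' x) -> forall x, gen SG S x -> gen SG S' x.
Proof.
  intros H x Hx. induction Hx.
  - apply gen_in. auto.
  - apply gen_one.
  - apply gen_mul; auto.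
  - apply gen_inv; auto.
  - eapply gen_eqv; eauto.
Qed.

Lemma sub_eq_comm_sub (SG : sgroup) (A A' B B' : scar SG -> Prop) :
  sub_eq SG A A' -> sub_eq SG B B' -> sub_eq SG (comm_sub SG A B) (comm_sub SG A' B').
Proof.
  intros HA HB z; split; apply gen_mono; intros x (a & b & Ha & Hb & ->);
  exists a, b; repeat split; auto; try apply HA; try apply HB; auto.
Qed.

Lemma sub_eq_trans (SG : sgroup) (A B C : scar SG -> Prop) :
  sub_eq SG A B -> sub_eq SG B C -> sub_eq SG A C.
Proof. intros H1 H2 x. rewrite (H1 x). apply H2. Qed.
Lemma sub_eq_sym (SG : sgroup) (A B : scar SG -> Prop) :
  sub_eq SG A B -> sub_eq SG B A.
Proof. intros H1 x. symmetry. apply H1. Qed.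

Lemma comm_sub_sym1 (SG : sgroup) (A B : scar SG -> Prop) :
  (forall x y, seqv SG (sinv SG (scomm SG x y)) (scomm SG y x)) ->
  forall z, comm_sub SG A B z -> comm_sub SG B A z.
Proof.
  intros H z Hz. induction Hz as [z (a & b & Ha & Hb & ->)| | | |].
  - apply gen_eqv with (sinv SG (scomm SG b a)). apply H.
    apply gen_inv, gen_in. exists b, a. auto.
  - apply gen_one.
  - apply gen_mul; auto.
  - apply gen_inv; auto.
  - eapply gen_eqv; eauto.
Qed.

Lemma comm_sub_sym (SG : sgroup) (A B : scar SG -> Prop) :
  (forall x y, seqv SG (sinv SG (scomm SG x y)) (scomm SG y x)) ->
  sub_eq SG (comm_sub SG A B) (comm_sub SG B A).
Proof. intros H z. split; apply comm_sub_sym1; auto. Qed.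

Lemma sub_eq_tens (G : group) (A A' B B' : G -> Prop) :
  sub_eq (Gs G) A A' -> sub_eq (Gs G) B B' -> sub_eq (Nu G) (tens G A B) (tens G A' B').
Proof.
  intros HA HB z; split; apply gen_mono; intros x (a & b & Ha & Hb & ->);
  exists a, b; repeat split; auto; try apply HA; try apply HB; auto.
Qed.

Section M.
Variable G : group.
Local Notation "x ** y" := (gmul G x y) (at level 40, left associativity).
Local Notation "x ^-1" := (ginv G x) (at level 2).
Local Notation "u =~ v" := (@nu_eqv G u v) (at level 70).
Local Notation W := (word G).
Local Notation i := (iota G).
Local Notation p := (phi G).
Local Notation cj := (gconj G).
Local Notation gc := (scomm (Gs G)).

Definition gnormal (A : G -> Prop) := forall g x, A x -> A (cj g x).
Definition nnormal (X : W -> Prop) := forall w x, X x -> X (wconj w x).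

Lemma scomm_Nu (x y : W) : scomm (Nu G) x y = wcomm x y.
Proof. unfold scomm, wcomm. simpl. now rewrite <- !app_assoc. Qed.

Lemma gN_eqv S (u v : W) : gen (Nu G) S u -> u =~ v -> gen (Nu G) S v.
Proof. intros H E. exact (@gen_eqv (Nu G) S u v E H). Qed.
Lemma gN_mul S (u v : W) : gen (Nu G) S u -> gen (Nu G) S v -> gen (Nu G) S (u ++ v).
Proof. intros. exact (@gen_mul (Nu G) S u v H H0). Qed.
Lemma gN_inv S (u : W) : gen (Nu G) S u -> gen (Nu G) S (winv u).
Proof. intros. exact (@gen_inv (Nu G) S u H). Qed.
Lemma gN_one S : gen (Nu G) S [].
Proof. exact (gen_one _ S). Qed.

Lemma gen_normal_G (S : G -> Prop) :
  (forall g s, S s -> gen (Gs G) S (cj g s)) -> gnormal (gen (Gs G) S).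
Proof.
  intros H g x Hx. induction Hx as [x Hx| | x y _ IHx _ IHy | x _ IHx | x y E _ IHx].
  - auto.
  - simpl. replace (cj g (gone G)) with (gone G). apply gen_one.
    unfold gconj. now gsimpl.
  - simpl. replace (cj g (x ** y)) with (gmul G (cj g x) (cj g y)). now apply gen_mul.
    unfold gconj. now gsimpl.
  - simpl. replace (cj g (x^-1)) with (ginv G (cj g x)). now apply gen_inv.
    unfold gconj. now gsimpl.
  - simpl in E. now subst.
Qed.

Lemma gen_normal_N (S : W -> Prop) :
  (forall w s, S s -> gen (Nu G) S (wconj w s)) -> nnormal (gen (Nu G) S).
Proof.
  intros H w x Hx. induction Hx as [x Hx| | x y _ IHx _ IHy | x _ IHx | x y E _ IHx].
  - auto.
  - simpl. eapply gN_eqv. apply gN_one. symmetry. apply wconj_nil.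
  - simpl. refine (gN_eqv (gN_mul IHx IHy) _). symmetry. apply wconj_app.
  - simpl. rewrite wconj_winv. now apply gN_inv.
  - eapply gN_eqv. eauto. simpl in E. now rewrite E.
Qed.

Lemma gnormal_comm A B : gnormal A -> gnormal B -> gnormal (comm_sub (Gs G) A B).
Proof.
  intros HA HB. apply gen_normal_G. intros g s (a & b & Ha & Hb & ->).
  apply gen_in; exists (cj g a), (cj g b). repeat split; auto.
  unfold gconj; simpl; now gsimpl.
Qed.

Lemma nnormal_comm X Y : nnormal X -> nnormal Y -> nnormal (comm_sub (Nu G) X Y).
Proof.
  intros HX HY. apply gen_normal_N. intros w s (a & b & Ha & Hb & ->).
  eapply gN_eqv. apply gen_in; exists (wconj w a), (wconj w b). repeat split; auto.
  rewrite !scomm_Nu. symmetry. apply wconj_comm.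
Qed.

Lemma nnormal_tens A B : gnormal A -> gnormal B -> nnormal (tens G A B).
Proof.
  intros HA HB. apply gen_normal_N. intros w s (a & b & Ha & Hb & ->).
  eapply gN_eqv. apply gen_in; exists (cj (pi w) a), (cj (pi w) b). repeat split; auto.
  symmetry. apply conj_gen.
Qed.

Section MM.
Variables A B C D : G -> Prop.
Hypotheses (HA : gnormal A) (HB : gnormal B) (HC : gnormal C) (HD : gnormal D).

Let R := tens G (comm_sub (Gs G) A B) (comm_sub (Gs G) C D).
Let L := comm_sub (Nu G) (tens G A B) (tens G C D).

Lemma L1 : forall t, tens G A B t -> forall s, tens G C D s -> R (wcomm t s).
Proof.
  assert (nR : nnormal R) by (apply nnormal_tens; apply gnormal_comm; auto).
  intros t Ht. induction Ht as [t0 Hg| | x y _ IHx _ IHy | x _ IHx | x y E _ IHx]; intros s Hs.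
  - destruct Hg as (a & b & Ha & Hb & ->).
    induction Hs as [s0 Hg| | x y _ IHx _ IHy | x _ IHx | x y E _ IHx].
    + destruct Hg as (c & d & Hc & Hd & ->).
      eapply gN_eqv. apply gen_in; exists (gc a b), (gc c d). repeat split.
      * apply gen_in; exists a, b. auto.
      * apply gen_in; exists c, d. auto.
      * symmetry. apply Kid.
    + eapply gN_eqv. apply gN_one. symmetry. apply CI6.
    + eapply gN_eqv. apply gN_mul. apply IHx. apply nR, IHy. symmetry. apply CI2.
    + eapply gN_eqv. apply nR, gN_inv, IHx. symmetry. apply CI4.
    + eapply gN_eqv. apply IHx. simpl in E. now rewrite E.
  - eapply gN_eqv. apply gN_one. symmetry. apply CI5.
  - eapply gN_eqv. apply gN_mul. apply nR, IHy, Hs. apply IHx, Hs. symmetry. apply CI1.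
  - eapply gN_eqv. apply nR, gN_inv, IHx, Hs. symmetry. apply CI3.
  - eapply gN_eqv. apply IHx, Hs. simpl in E. now rewrite E.
Qed.

Lemma L2 : forall x, comm_sub (Gs G) A B x -> forall y, comm_sub (Gs G) C D y ->
  L (wcomm (i x) (p y)).
Proof.
  assert (nL : nnormal L) by (apply nnormal_comm; apply nnormal_tens; auto).
  intros x Hx. induction Hx as [x0 Hg| | x y _ IHx _ IHy | x _ IHx | x y E _ IHx]; intros s Hs.
  - destruct Hg as (a & b & Ha & Hb & ->).
    induction Hs as [s0 Hg| | x y _ IHx _ IHy | x _ IHx | x y E _ IHx].
    + destruct Hg as (c & d & Hc & Hd & ->).
      eapply gN_eqv. apply gen_in.
      exists (wcomm (i a) (p b)), (wcomm (i c) (p d)). repeat split.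
      * apply gen_in; exists a, b. auto.
      * apply gen_in; exists c, d. auto.
      * rewrite scomm_Nu. apply Kid.
    + eapply gN_eqv. apply gN_one. cbn [sone Gs]. rewrite unit_p. symmetry. apply CI6.
    + refine (gN_eqv (gN_mul IHx (nL (p x) _ IHy)) _). cbn [smul Gs].
      rewrite <- merge_p. symmetry. apply CI2.
    + refine (gN_eqv (nL (winv (p x)) _ (gN_inv IHx)) _). cbn [sinv Gs].
      rewrite <- winv_p. symmetry. apply CI4.
    + simpl in E. now subst.
  - eapply gN_eqv. apply gN_one. cbn [sone Gs]. rewrite unit_i. symmetry. apply CI5.
  - refine (gN_eqv (gN_mul (nL (i x) _ (IHy s Hs)) (IHx s Hs)) _). cbn [smul Gs].
    rewrite <- merge_i. symmetry. apply CI1.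
  - refine (gN_eqv (nL (winv (i x)) _ (gN_inv (IHx s Hs))) _). cbn [sinv Gs].
    rewrite <- winv_i. symmetry. apply CI3.
  - simpl in E. subst. auto.
Qed.

Lemma Mlemma : sub_eq (Nu G) L R.
Proof.
  intro z. split; intro Hz.
  - induction Hz as [z (t & s & Ht & Hs & ->)| | | |].
    + rewrite scomm_Nu. now apply L1.
    + apply gen_one.
    + now apply gen_mul.
    + now apply gen_inv.
    + eapply gen_eqv; eauto.
  - induction Hz as [z (x & y & Hx & Hy & ->)| | | |].
    + now apply L2.
    + apply gen_one.
    + now apply gen_mul.
    + now apply gen_inv.
    + eapply gen_eqv; eauto.
Qed.
End MM.
End M.
Lemma sub_eq_refl (SG : sgroup) (A : scar SG -> Prop) : sub_eq SG A A.
Proof. intro; tauto. Qed.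

Section Main.
Variable G : group.

Lemma gnormal_setT : gnormal G (setT (Gs G)).
Proof. intros g x _. exact I. Qed.

Lemma gnormal_derived n : gnormal G (derived (Gs G) (setT (Gs G)) n).
Proof. induction n; simpl. apply gnormal_setT. now apply gnormal_comm. Qed.

Lemma gnormal_gamma H : gnormal G H -> forall n, gnormal G (gamma (Gs G) H n).
Proof.
  intros HH n. induction n as [|n IH]; [exact HH|].
  destruct n as [|k]; [exact HH|]. simpl. apply gnormal_comm; auto.
Qed.

Lemma symN : forall x y : scar (Nu G), seqv (Nu G) (sinv (Nu G) (scomm (Nu G) x y)) (scomm (Nu G) y x).
Proof.
  intros x y. rewrite !scomm_Nu. cbn [seqv sinv Nu]. unfold wcomm.
  rewrite !winv_app, !winv_winv, <- !app_assoc. apply nu_refl.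
Qed.
Lemma symG : forall x y : scar (Gs G), seqv (Gs G) (sinv (Gs G) (scomm (Gs G) x y)) (scomm (Gs G) y x).
Proof. intros x y. simpl. now gsimpl. Qed.

End Main.

Theorem proposition1p3 (G : group) :
  (forall n : nat,
     sub_eq (Nu G)
       (derived (Nu G) (tens G (setT (Gs G)) (setT (Gs G))) n)
       (tens G (derived (Gs G) (setT (Gs G)) n) (derived (Gs G) (setT (Gs G)) n)))
  /\
  (forall n : nat, 1 <= n ->
     sub_eq (Nu G)
       (gamma (Nu G) (tens G (setT (Gs G)) (setT (Gs G))) (S n))
       (tens G (gamma (Gs G) (derived (Gs G) (setT (Gs G)) 1) n)
               (derived (Gs G) (setT (Gs G)) 1))
     /\
     sub_eq (Nu G)
       (gamma (Nu G) (tens G (setT (Gs G)) (setT (Gs G))) (S n))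
       (tens G (derived (Gs G) (setT (Gs G)) 1)
               (gamma (Gs G) (derived (Gs G) (setT (Gs G)) 1) n))).
Proof.
  pose proof (@gnormal_setT G) as NT.
  pose proof (@gnormal_derived G 1) as N1.
  split.
  - intro n. induction n as [|n IH].
    + apply sub_eq_refl.
    + eapply sub_eq_trans. apply (sub_eq_comm_sub IH IH).
      apply Mlemma; apply gnormal_derived.
  - intros n Hn. destruct n as [|n]; [inversion Hn|]. clear Hn.
    induction n as [|m [IH1 IH2]].
    + split; apply (Mlemma NT NT NT NT).
    + pose proof (gnormal_gamma N1 (S m)) as Ng. split.
      * eapply sub_eq_trans. apply (sub_eq_comm_sub IH1 (sub_eq_refl _ _)).
        apply (Mlemma Ng N1 NT NT).
      * eapply sub_eq_trans. apply (sub_eq_comm_sub IH2 (sub_eq_refl _ _)).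
        eapply sub_eq_trans. apply comm_sub_sym, symN.
        eapply sub_eq_trans. apply (Mlemma NT NT N1 Ng).
        apply sub_eq_tens. apply sub_eq_refl. apply comm_sub_sym, symG.
Qed.
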